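(* Let $G=(V,E)$ be a directed graph of maximum height $\lambda(G)$ (in the setting described in the context, i.e. a rooted stream-network tree), let $b\ge 2$ be an integer, and let $S=\{G_0,\dots,G_{|S|}\}$ denote the set of reduced graphs obtained by applying the Log Reduced Graphs (LRG) algorithm with base $b$ to $G$. Then $|S|\le \log_b(\lambda(G))$.
   Context: A stream network is modelled as a directed graph $G=(V,E)$ with one vertex per stream reach and an edge per stream junction; every vertex except a unique root has exactly one downstream edge, so $G$ is a tree rooted at $\mathrm{root}(G)$ (the only vertex with no downstream edge). A leaf is a vertex with no upstream edge. For $v\in V$, $\delta(v)$ is the distance of $v$ from the root (number of edges on the downstream path from $v$ to the root). The height $\lambda(G)$ is the maximal number of vertices on a path between the root and any leaf. A vertex $w$ is upstream of $v$ if $v$ lies on the downstream path from $w$ to the root. The Log Reduced Graphs algorithm with base $b\ge 2$ proceeds through reduction levels $rf=0,1,2,\dots$: at level $rf$ it forms a graph $H_{rf}$ whose vertex set is $\{v\in V:\ \delta(v)\equiv 0 \pmod{b^{rf}}\}$, with an edge $(u,v)$ whenever $u$ is upstream of $v$ and $\delta(u)=\delta(v)+b^{rf}$ (each vertex $u$ of $H_{rf}$ also receives the union of the catchment polygons of the vertices upstream of $u$ lying less than $b^{rf}$ levels above it). Level $0$ gives $G$ itself. The recursion stops at the first level whose graph contains only the root. $S$ is the collection of graphs produced. *)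

(* Defs.v *)
From Stdlib Require Import Reals.
From mathcomp Require Import all_boot.

Set Implicit Arguments.
Unset Strict Implicit.
Unset Printing Implicit Defensive.

Section StreamTree.
Variable V : finType.
(* [down v] = Some w iff (v, w) is the (unique) downstream edge of v. *)
Variable down : V -> option V.
Variable root : V.

Definition dstep (v : V) : V := odflt v (down v).

Definition stream_tree : Prop :=
  down root = None /\
  (forall v, v != root -> down v != None) /\
  (forall v, exists n, iter n dstep v = root).

(* delta(v): number of edges on the downstream path from v to the root
   (in a tree on V this is < #|V|). *)
Definition depth (v : V) : nat :=
  find (fun n => iter n dstep v == root) (iota 0 #|V|).

Definition upstream (w v : V) : Prop := exists n, iter n dstep w = v.

Definition leaf (v : V) : bool := [forall u, down u != Some v].

(* lambda(G): maximal number of vertices on a path between root and a leaf *)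
Definition height : nat := \max_(v | leaf v) (depth v).+1.

Definition lrg_vertices (b rf : nat) : {set V} :=
  [set v | b ^ rf %| depth v].

Definition lrg_edge (b rf : nat) (u v : V) : Prop :=
  u \in lrg_vertices b rf /\ v \in lrg_vertices b rf /\
  upstream u v /\ depth u = depth v + b ^ rf.

Definition lrg_stop_level (b r : nat) : Prop :=
  lrg_vertices b r = [set root] /\
  (forall r', r' < r -> lrg_vertices b r' <> [set root]).

(* S: the reduced graphs produced before stopping, G_0 = H_0 = G, ...,
   G_{r-1} = H_{r-1}. *)
Definition lrg_S (b r : nat) : seq ({set V} * (V -> V -> Prop)) :=
  [seq (lrg_vertices b rf, lrg_edge b rf) | rf <- iota 0 r].

End StreamTree.

Definition logb (b x : R) : R := Rdiv (ln x) (ln b).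

(* Main.v *)
Require Import Defs.
From Stdlib Require Import Reals.
From mathcomp Require Import all_boot zify.
From Stdlib Require Import Lra.

Section S.
Variable V : finType.
Variable down : V -> option V.
Variable root : V.
Hypothesis htree : stream_tree down root.
Local Notation dstep := (dstep down).
Local Notation depth := (depth down root).

Lemma droot : dstep root = root.
Proof. by rewrite /Defs.dstep (proj1 htree). Qed.

Lemma iter_root n : iter n dstep root = root.
Proof. by elim: n => //= n ->; rewrite droot. Qed.

Lemma hit v : exists2 n, n < #|V| & iter n dstep v = root.
Proof.
have ex : exists n, iter n dstep v == root.
  by have [n Hn] := (proj2 (proj2 htree)) v; exists n; apply/eqP.
set m := ex_minn ex.
have Hm : iter m dstep v = root by apply/eqP; rewrite /m; case: ex_minnP.
have Hmin : forall k, iter k dstep v = root -> m <= k.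
  by move=> k /eqP Hk; rewrite /m; case: ex_minnP => n _ /(_ k Hk).
case: (ltnP m #|V|) => [lt|ge]; first by exists m.
exfalso.
set s := [seq iter k dstep v | k <- iota 0 m.+1].
have us : uniq s.
  rewrite map_inj_in_uniq ?iota_uniq // => i j; rewrite !mem_iota !add0n => Hi Hj.
  have key : forall i j, i < j -> j < m.+1 -> iter i dstep v = iter j dstep v -> False.
    move=> i' j' lij ljm E.
    have : iter (m - j' + i') dstep v = root.
      by rewrite iterD E -iterD subnK.
    move/Hmin; lia.
  case: (ltngtP i j) => // [l|l] E; exfalso.
    exact: (key i j).
  exact: (key j i).
have := max_card (mem s).
by rewrite (card_uniqP us) size_map size_iota; lia.
Qed.

Lemma depth_spec v : [/\ depth v < #|V|, iter (depth v) dstep v = root &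
   forall k, iter k dstep v = root -> depth v <= k].
Proof.
have [n ltn Hn] := hit v.
have hs : has (fun n => iter n dstep v == root) (iota 0 #|V|).
  by apply/hasP; exists n; [rewrite mem_iota | apply/eqP].
have lt : depth v < #|V| by move: hs; rewrite has_find size_iota.
split => //.
  apply/eqP; have := nth_find 0 hs; rewrite nth_iota //.
move=> k Hk; rewrite leqNgt; apply/negP => lk.
have := before_find 0 lk; rewrite nth_iota ?Hk ?eqxx //; lia.
Qed.

Lemma depth_root : depth root = 0.
Proof. by have [_ _ /(_ 0 erefl)] := depth_spec root; rewrite leqn0 => /eqP. Qed.

Lemma depth_pos v : v != root -> 0 < depth v.
Proof.
move=> nv; have [_ H _] := depth_spec v; rewrite lt0n; apply/negP => /eqP E.
by move: H; rewrite E /= => E'; rewrite E' eqxx in nv.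
Qed.

Lemma depth_parent w u : down w = Some u -> depth w = (depth u).+1.
Proof.
move=> dw.
have su : dstep w = u by rewrite /Defs.dstep dw.
have wr : w != root by apply/eqP => E; move: dw; rewrite E (proj1 htree).
have [_ Hw mw] := depth_spec w; have [_ Hu mu] := depth_spec u.
have pw := @depth_pos w wr.
apply/eqP; rewrite eqn_leq; apply/andP; split.
  by apply: mw; rewrite iterSr su.
have : iter (depth w).-1 dstep u = root.
  by rewrite -su -iterSr prednK.
move/mu; lia.
Qed.

Lemma exists_leaf v : exists2 l, leaf down l & depth v <= depth l.
Proof.
have [u _ Hu] := @arg_maxnP V v xpredT depth erefl.
exists u; last exact: Hu.
apply/forallP => w; apply/negP => /eqP dw.
have := Hu w erefl; rewrite (@depth_parent w u dw); lia.
Qed.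
End S.

Lemma INR_expn b n : INR (b ^ n) = Rpow_def.pow (INR b) n.
Proof. elim: n => [|n IH]; first by rewrite expn0. by rewrite expnS /= -IH -mult_INR. Qed.

Theorem lemma1 (V : finType) (down : V -> option V) (root : V) (b : nat)
  (hb : 2 <= b) (htree : stream_tree down root) (r : nat)
  (hstop : lrg_stop_level down root b r) :
  Rle (INR (size (lrg_S down root b r)).-1) (logb (INR b) (INR (height down root))).
Proof.
rewrite /lrg_S size_map size_iota /logb.
have lnb : Rlt 0 (ln (INR b)).
  rewrite -ln_1; apply: ln_increasing; first lra.
  have := le_INR 2 b (ssrnat.leP hb); simpl; lra.
have [v Hv] : exists v, b ^ r.-1 <= (depth down root v).+1.
  case: r hstop => [|r] [_ hne] /=; first by exists root; rewrite expn0.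
  have hr := hne r (ltnSn r).
  case: (boolP [exists v, (v \in lrg_vertices down root b r) && (v != root)]).
    move/existsP => [v /andP [Hv nv]]; exists v.
    rewrite inE in Hv; apply: leq_trans (leqnSn _).
    by apply: dvdn_leq => //; apply: (@depth_pos V down root htree).
  move/existsPn => H; exfalso; apply: hr; apply/setP => x.
  rewrite in_set1; case: (eqVneq x root) => [->|nx].
    by rewrite inE (@depth_root V down root htree) dvdn0.
  by have := H x; rewrite nx andbT => /negbTE.
have [l Hl Hdl] := @exists_leaf V down root htree v.
have key : b ^ r.-1 <= height down root.
  apply: (leq_trans Hv). have := @leq_bigmax_cond _ (leaf down) (fun x => (depth down root x).+1) l Hl. rewrite /height. move=> H. exact: leq_ltn_trans Hdl H.
set n := r.-1 in key *; set h := height down root in key *.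
have pos : 0 < b ^ n by rewrite expn_gt0 (ltnW hb).
have le1 : Rle (ln (INR (b ^ n))) (ln (INR h)).
  have Hp := lt_0_INR _ (ssrnat.ltP pos).
  have := le_INR _ _ (ssrnat.leP key) => /Rle_lt_or_eq_dec [lt|->]; last lra.
  by apply: Rlt_le; apply: ln_increasing.
rewrite INR_expn ln_pow in le1; last by have := lt_0_INR _ (ssrnat.ltP (ltnW hb)).
rewrite /Rdiv -[INR n](Rmult_1_r) -(Rinv_r (ln (INR b))); last lra.
rewrite -Rmult_assoc; apply: Rmult_le_compat_r => //.
by apply: Rlt_le; apply: Rinv_0_lt_compat.
Qed.
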